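(* Let $q \geq 4$ be a power of $2$, and let $\mathcal{C} \subseteq (\mathbb{F}_{q^2})^{q^3}$ be the Hermitian-Lifted Code (defined in the context). Then the rate of $\mathcal{C}$, i.e. $\dim_{\mathbb{F}_{q^2}}(\mathcal{C})/q^3$, is at least $0.007$.
   Context: Let $q$ be a prime power. The Hermitian curve $\mathcal{H}_q$ is given by the affine equation $x^q + x = y^{q+1}$. Let $\mathcal{X} = \{(x,y) \in (\mathbb{F}_{q^2})^2 : x^q + x = y^{q+1}\}$ be its set of affine $\mathbb{F}_{q^2}$-rational points; $|\mathcal{X}| = q^3$. For $\alpha,\beta \in \mathbb{F}_{q^2}$, let $L_{\alpha,\beta}:\mathbb{F}_{q^2} \to (\mathbb{F}_{q^2})^2$, $L_{\alpha,\beta}(t) = (\alpha t + \beta, t)$, and let $\mathcal{L} = \{L_{\alpha,\beta} : \alpha,\beta \in \mathbb{F}_{q^2}\}$. For $f \in \mathbb{F}_{q^2}[x,y]$, $g \in \mathbb{F}_{q^2}[t]$ and $L \in \mathcal{L}$, say that $f\circ L$ agrees with $g$ on $\mathcal{X}$ if $f(L(t)) = g(t)$ for all $t \in \mathbb{F}_{q^2}$ with $L(t) \in \mathcal{X}$. Let $\mathcal{F}$ be the set of $f \in \mathbb{F}_{q^2}[x,y]$ such that for every $L \in \mathcal{L}$ there exists $g \in \mathbb{F}_{q^2}[t]$ with $\deg g \leq q-1$ such that $f \circ L$ agrees with $g$ on $\mathcal{X}$. The Hermitian-Lifted Code is $\mathcal{C} = \{ (f(P))_{P \in \mathcal{X}}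 : f \in \mathcal{F}\}$, a linear code of length $q^3$ over $\mathbb{F}_{q^2}$. *)

(* Defs.v *)
From HB Require Import structures.
From mathcomp Require Import all_boot all_order all_algebra.
From Stdlib Require Import ClassicalEpsilon.
Set Implicit Arguments. Unset Strict Implicit. Unset Printing Implicit Defensive.
Import GRing.Theory.
Local Open Scope ring_scope.

(* F plays the role of F_{q^2}; bivariate polynomials F[x,y] are represented
   as {poly {poly F}}: f = sum_i f_i(x) y^i. *)

Definition herm_pts (F : finFieldType) (q : nat) : {set F * F} :=
  [set p | p.1 ^+ q + p.1 == p.2 ^+ q.+1].

(* f(a, b) for f in F[x,y] (outer variable = y, inner variable = x). *)
Definition eval2 (F : finFieldType) (f : {poly {poly F}}) (a b : F) : F :=
  (f.[b%:P]).[a].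

Definition in_lifted (F : finFieldType) (q : nat) (f : {poly {poly F}}) : Prop :=
  forall alpha beta : F, exists g : {poly F},
    (size g <= q)%N /\
    forall t : F, (alpha * t + beta, t) \in herm_pts F q ->
      eval2 f (alpha * t + beta) t = g.[t].

Definition hl_word (F : finFieldType) (q : nat) (v : 'rV[F]_#|herm_pts F q|) : Prop :=
  exists f : {poly {poly F}}, in_lifted q f /\
    forall i : 'I_#|herm_pts F q|,
      v 0 i = eval2 f (enum_val i).1 (enum_val i).2.

Definition hl_wordb (F : finFieldType) (q : nat) (v : 'rV[F]_#|herm_pts F q|) : bool :=
  if excluded_middle_informative (hl_word v) then true else false.

(* The Hermitian-lifted code, as the F-subspace spanned by its codewords
   (the set of codewords is itself linear, so this is the code). *)
Definition hl_code (F : finFieldType) (q : nat) : {vspace 'rV[F]_#|herm_pts F q|} :=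
  <<[seq v <- enum [set: 'rV[F]_#|herm_pts F q|] | hl_wordb v]>>%VS.

(* Main.v *)
Require Import Defs.
From HB Require Import structures.
From mathcomp Require Import all_boot all_order all_algebra.
From mathcomp Require Import all_field.
From mathcomp Require Import ring zify.
From Stdlib Require Import ClassicalEpsilon.
Set Implicit Arguments. Unset Strict Implicit. Unset Printing Implicit Defensive.
Import GRing.Theory.

Module Aux.
Local Open Scope ring_scope.

Section Core.
Variable F : finFieldType.
Variable q : nat.
Hypothesis hfrob : [pchar F].-nat q.
Hypothesis h2 : [pchar F].-nat 2.
Hypothesis hcard : forall x : F, x ^+ q ^+ q = x.

Lemma frobD (x y : F) : (x + y) ^+ q = x ^+ q + y ^+ q.
Proof. exact: exprDn_pchar. Qed.
Lemma frobB (x y : F) : (x - y) ^+ q = x ^+ q - y ^+ q.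
Proof. by rewrite frobD exprNn_pchar. Qed.
Lemma sqrD (x y : F) : (x + y) ^+ 2 = x ^+ 2 + y ^+ 2.
Proof. exact: exprDn_pchar. Qed.

Lemma size_lin (a b : F) : (size (a%:P * 'X + b%:P)%R <= 2)%N.
Proof.
apply: (leq_trans (size_polyD _ _)); rewrite geq_max; apply/andP; split.
  apply: (leq_trans (size_polyMleq _ _)); rewrite size_polyX.
  by have := size_polyC_leq1 a; case: (size _) => [|[|]].
by rewrite (leq_trans (size_polyC_leq1 _)).
Qed.

Lemma size_lin_exp (p : {poly F}) n : (size p <= 2)%N -> (size (p ^+ n)%R <= n.+1)%N.
Proof.
move=> hp; apply: (leq_trans (size_poly_exp_leq _ _)).
have : ((size p).-1 <= 1)%N by lia.
rewrite ltnS; nia.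
Qed.

Lemma core (al be : F) (K U W : nat) :
  (1 <= K)%N -> (2 * K <= q)%N -> (2 * (U + W) + 1 <= q)%N ->
  exists g : {poly F}, (size g <= q)%N /\
    forall t : F, (al * t + be) ^+ q + (al * t + be) = t ^+ q.+1 ->
      (al * t + be) ^+ (2 * K * q + 2 * U) * t ^+ (2 * W) = g.[t].
Proof.
move=> K1 Kq UWq.
set D := be ^+ q + be + al ^+ q * al.
have uD : forall t, (al * t + be) ^+ q + (al * t + be) = t ^+ q.+1 ->
    (t - al ^+ q) ^+ q.+1 = D.
  move=> t ht; rewrite exprSr frobB hcard.
  have e : t ^+ q * t = al ^+ q * t ^+ q + be ^+ q + (al * t + be).
    by rewrite -exprSr -ht frobD exprMn.
  have -> : (t ^+ q - al) * (t - al ^+ q) = t ^+ q * t - al ^+ q * t ^+ q - al * t + al * al ^+ q by ring.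
  rewrite e /D; ring.
have [D0|Dn0] := eqVneq D 0.
  exists ((al * al ^+ q + be) ^+ (2 * K * q + 2 * U) * (al ^+ q) ^+ (2 * W))%:P.
  split; first by rewrite (leq_trans (size_polyC_leq1 _)) // (leq_trans _ Kq) // muln_gt0.
  move=> t ht; rewrite hornerC.
  have := uD t ht; rewrite D0 => /eqP; rewrite expf_eq0 /= subr_eq0 => /eqP ->.
  by [].
set B := al ^+ q * al + be.
pose ht := (((al ^+ q * D)%:P + (B ^+ q)%:P * 'X) ^+ K * (al%:P * 'X + B%:P) ^+ U
            * ('X + (al ^+ q)%:P) ^+ W : {poly F}).
pose L1 := take_poly K ht.
pose H1 := drop_poly K ht.
pose g0 := D^-1 *: (L1 ^+ 2 * 'X^(q.+1 - 2 * K)) + H1 ^+ 2.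
exists (g0 \Po ('X - (al ^+ q)%:P)).
split.
  rewrite size_comp_poly2 ?size_XsubC //.
  have s1 : (size (((al ^+ q * D)%:P + (B ^+ q)%:P * 'X) ^+ K)%R <= K.+1)%N.
    by apply: size_lin_exp; rewrite addrC size_lin.
  have s2 : (size ((al%:P * 'X + B%:P) ^+ U)%R <= U.+1)%N.
    by apply: size_lin_exp; rewrite size_lin.
  have s3 : (size (('X + (al ^+ q)%:P) ^+ W)%R <= W.+1)%N.
    by apply: size_lin_exp; rewrite size_XaddC.
  have sht : (size ht <= K + U + W + 1)%N.
    rewrite /ht; apply: (leq_trans (size_polyMleq _ _)).
    have := size_polyMleq (((al ^+ q * D)%:P + (B ^+ q)%:P * 'X) ^+ K) ((al%:P * 'X + B%:P) ^+ U).
    lia.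
  have sL1 : (size L1 <= K)%N by apply: size_take_poly.
  have sH1 : (size H1 <= U + W + 1)%N by rewrite /H1 size_drop_poly; lia.
  have sL2 := size_poly_exp_leq L1 2.
  have sH2 := size_poly_exp_leq H1 2.
  have sLX := size_polyMleq (L1 ^+ 2) 'X^(q.+1 - 2 * K).
  rewrite size_polyXn in sLX.
  have sZ := size_scale_leq D^-1 (L1 ^+ 2 * 'X^(q.+1 - 2 * K)).
  apply: (leq_trans (size_polyD _ _)); rewrite geq_max; apply/andP; split.
    apply: (leq_trans sZ); apply: (leq_trans sLX); lia.
  apply: (leq_trans sH2); lia.
move=> t hcurve.
rewrite horner_comp.
set u := t - al ^+ q.
have huD := uD t hcurve; rewrite -/u in huD.
have un0 : u != 0.
  by apply: contraNneq Dn0 => u0; rewrite -huD u0 expr0n.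
have tE : t = u + al ^+ q by rewrite /u subrK.
have xE : al * t + be = al * u + B by rewrite tE /B; ring.
have xqE : (al * t + be) ^+ q * u = al ^+ q * D + B ^+ q * u.
  rewrite xE frobD exprMn mulrDl -mulrA -exprSr huD.
  by [].
have htE : ht.[u] = ((al * t + be) ^+ q * u) ^+ K * (al * t + be) ^+ U * t ^+ W.
  rewrite /ht !hornerE xqE xE tE.
  by rewrite /B addrA.
have split1 : ht.[u] = L1.[u] + H1.[u] * u ^+ K.
  by rewrite -{1}(poly_take_drop K ht) !hornerE.
set X := al * t + be.
set Z := (X ^+ q) ^+ K * X ^+ U * t ^+ W.
have ZE : Z * u ^+ K = L1.[u] + H1.[u] * u ^+ K.
  by rewrite -split1 htE /Z exprMn; ring.
have LE : X ^+ (2 * K * q + 2 * U) * t ^+ (2 * W) = Z ^+ 2.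
  rewrite /Z !exprMn -!exprM exprD.
  by congr (X ^+ _ * X ^+ _ * t ^+ _); lia.
rewrite LE hornerXsubC -/u.
clearbody Z.
have u2n0 : u ^+ (2 * K) != 0 by rewrite expf_neq0.
apply: (mulIf u2n0).
have -> : Z ^+ 2 * u ^+ (2 * K) = (Z * u ^+ K) ^+ 2.
  by rewrite exprMn -exprM (mulnC K 2%N).
rewrite ZE sqrD exprMn -exprM (mulnC K 2%N).
rewrite hornerD hornerZ hornerM !horner_exp hornerX.
have uq : u ^+ (q.+1 - 2 * K) * u ^+ (2 * K) = D.
  by rewrite -exprD subnK ?huD // (leq_trans Kq).
rewrite mulrDl -!mulrA uq.
have -> : D^-1 * (L1.[u] * (L1.[u] * D)) = L1.[u] ^+ 2 * (D^-1 * D) by ring.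
by rewrite mulVf // mulr1.
Qed.
Hypothesis hF : #|F| = (q * q)%N.
Hypothesis q2 : (2 <= q)%N.

Lemma card_roots (p : {poly F}) : p != 0 -> (#|[set z | root p z]| < size p)%N.
Proof.
move=> pn0; rewrite cardE; apply: max_poly_roots => //; last exact: enum_uniq.
by apply/allP => z; rewrite mem_enum inE.
Qed.

Lemma fiber_big (n : F) : n != 0 -> n ^+ q = n ->
  (q.+1 <= #|[set y : F | y ^+ q.+1 == n]|)%N.
Proof.
move=> n0 nq.
have nq1 : n ^+ q.-1 = 1.
  apply: (mulIf n0); rewrite mul1r -exprSr prednK ?nq //; lia.
pose P : {poly F} := 'X^(q.+1) - n%:P.
pose S : {poly F} := \sum_(i < q.-1) ('X^(q.+1)) ^+ (q.-1.-1 - i) * (n%:P) ^+ i.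
have PS : P * S = 'X^(q.+1 * q.-1) - 1.
  by rewrite /P /S -subrXX -exprM -polyC_exp nq1.
have N0 : (0 < q.+1 * q.-1)%N by rewrite muln_gt0; lia.
have Rn0 : ('X^(q.+1 * q.-1) - 1 : {poly F}) != 0.
  by rewrite -size_poly_eq0 size_Xn_sub_1.
have Sn0 : S != 0 by apply: contraNneq Rn0 => S0; rewrite -PS S0 mulr0.
have Pn0 : P != 0 by rewrite -size_poly_eq0 size_XnsubC.
have sS : size S = ((q.+1 * q.-1).+1 - q.+1)%N.
  have := size_mul Pn0 Sn0; rewrite PS size_Xn_sub_1 // size_XnsubC //.
  by move=> ->; rewrite addSn /= addKn.
have cover : [set~ (0 : F)] \subset [set y : F | y ^+ q.+1 == n] :|: [set z | root S z].
  apply/subsetP => z; rewrite !inE => z0.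
  have : root (P * S) z.
    rewrite PS rootE !hornerE subr_eq0; apply/eqP.
    apply: (mulIf z0); rewrite mul1r -exprSr.
    have -> : (q.+1 * q.-1).+1 = #|F| by rewrite hF; move: q2; clear; nia.
    exact: expf_card.
  by rewrite rootM /P rootE !hornerE subr_eq0.
have := subset_leq_card cover.
rewrite cardsC1 hF.
have := (leq_card_setU [set y : F | y ^+ q.+1 == n] [set z | root S z]).1.
have := card_roots Sn0.
rewrite sS.
move: #|_ :|: _| #|[set z | root S z]| #|[set y : F | y ^+ q.+1 == n]| => a b c.
move: q2; clear; nia.
Qed.

Lemma size_sumXn (I : finType) (k : I -> F) (e : I -> nat) (N : nat) :
  (forall i, e i < N)%N -> (size (\sum_i k i *: 'X^(e i) : {poly F})%R <= N)%N.
Proof.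
move=> he; apply: (leq_trans (size_sum _ _ _)); apply/bigmax_leqP => i _.
by apply: (leq_trans (size_scale_leq _ _)); rewrite size_polyXn.
Qed.

Lemma coef_sumXn (I : finType) (k : I -> F) (e : I -> nat) j :
  (\sum_i k i *: 'X^(e i) : {poly F})`_j = \sum_i k i * (j == e i)%:R.
Proof. by rewrite coef_sum; apply: eq_bigr => i _; rewrite coefZ coefXn. Qed.

Lemma horner_sumXn (I : finType) (k : I -> F) (e : I -> nat) x :
  (\sum_i k i *: 'X^(e i) : {poly F}).[x] = \sum_i k i * x ^+ e i.
Proof. by rewrite horner_sum; apply: eq_bigr => i _; rewrite hornerZ hornerXn. Qed.

Lemma big_roots_zero (p : {poly F}) (A : {set F}) :
  (size p <= #|A|)%N -> (forall z, z \in A -> p.[z] = 0) -> p = 0.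
Proof.
move=> hs hz; apply/eqP; apply: contraT => pn0.
have sub : A \subset [set z | root p z].
  by apply/subsetP => z zA; rewrite inE rootE hz.
have := card_roots pn0; have := subset_leq_card sub; lia.
Qed.

Lemma indep (I : finType) (a b : I -> nat) (c : I -> F) :
  injective (fun i => (a i, b i)) ->
  (forall i, a i + q + 2 <= q * q)%N ->
  (forall i, b i < q)%N ->
  (forall x y : F, x ^+ q + x = y ^+ q.+1 -> \sum_i c i * x ^+ a i * y ^+ b i = 0) ->
  forall i, c i = 0.
Proof.
move=> inj ha hb hz i0.
have step1 : forall x : F, x ^+ q + x != 0 ->
    \sum_i (c i * x ^+ a i) * (b i0 == b i)%:R = 0.
  move=> x nx.
  pose Py : {poly F} := \sum_i (c i * x ^+ a i) *: 'X^(b i).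
  have nq : (x ^+ q + x) ^+ q = x ^+ q + x by rewrite frobD hcard addrC.
  have Py0 : Py = 0.
    apply: (big_roots_zero (A := [set y : F | y ^+ q.+1 == x ^+ q + x])).
      apply: (leq_trans (size_sumXn _ hb)); apply: (leq_trans _ (fiber_big nx nq)).
      exact: leqnSn.
    move=> y; rewrite inE => /eqP hy.
    rewrite horner_sumXn -[RHS](hz x y (esym hy)).
    by [].
  by rewrite -coef_sumXn -/Py Py0 coef0.
pose Qx : {poly F} := \sum_i (c i * (b i0 == b i)%:R) *: 'X^(a i).
have Qx0 : Qx = 0.
  pose T : {poly F} := 'X^q + 'X.
  have Tn0 : T != 0.
    by rewrite -size_poly_eq0 /T size_polyDl ?size_polyXn // size_polyX.
  have sT : size T = q.+1 by rewrite /T size_polyDl ?size_polyXn // size_polyX.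
  apply: (big_roots_zero (A := ~: [set z | root T z])).
    have := card_roots Tn0; have := cardsC [set z | root T z]; rewrite hF sT.
    have : (size Qx <= q * q - q - 1)%N.
      apply: size_sumXn => i; have := ha i; lia.
    lia.
  move=> x; rewrite !inE /T rootE !hornerE => nx.
  rewrite horner_sumXn -[RHS](step1 x nx).
  by apply: eq_bigr => i _; rewrite mulrAC.
have := congr1 (fun p : {poly F} => p`_(a i0)) Qx0.
rewrite coef_sumXn coef0 (bigD1 i0) //= !eqxx !mulr1 big1 ?addr0 //.
move=> i ni.
have [ea|ne] := eqVneq (a i0) (a i); last by rewrite mulr0.
have [eb|ne] := eqVneq (b i0) (b i); last by rewrite mulr0 mul0r.
by case/eqP: ni; apply: inj; rewrite /= ea eb.
Qed.

End Core.

Lemma divmod_uniq (k k' u u' d : nat) : (u < d)%N -> (u' < d)%N ->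
  (k * d + u = k' * d + u')%N -> k = k' /\ u = u'.
Proof.
move=> ud u'd e.
have d0 : (0 < d)%N by lia.
have e1 := congr1 (fun n => n %/ d)%N e.
have e2 := congr1 (fun n => n %% d)%N e.
rewrite /= !divnMDl // !divn_small // !addn0 in e1.
rewrite /= !modnMDl !modn_small // in e2.
Qed.

Lemma eval2_mono (F : finFieldType) (a b : nat) (x y : F) :
  eval2 (('X^a)%:P * 'X^b : {poly {poly F}}) x y = x ^+ a * y ^+ b.
Proof. by rewrite /eval2 !hornerE. Qed.

End Aux.
Import Aux.

Theorem mainTheorem1 (F : finFieldType) (q : nat) :
  (exists m : nat, q = (2 ^ m)%N) -> (4 <= q)%N -> #|F| = (q ^ 2)%N ->
  (7 * q ^ 3 <= 1000 * \dim (hl_code F q))%N.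
Proof.
move=> [m qm] q4 hF.
have hF' : #|F| = (q * q)%N by rewrite hF mulnn.
have m2 : (2 <= m)%N.
  rewrite leqNgt; apply/negP => hm; move: q4; rewrite qm.
  by case: m hm {qm} => [|[|]].
have char2 : (2 \in [pchar F])%R.
  by apply: (@card_finPcharP F 2 (m * 2)) => //; rewrite hF qm -expnM.
have h2 : [pchar F]%R.-nat 2 by rewrite pnatE.
have hfrob : [pchar F]%R.-nat q by rewrite qm pnatX h2.
have hcard : forall x : F, (x ^+ q ^+ q = x)%R by move=> x; rewrite -exprM -hF' expf_card.
set r := (2 ^ (m - 2))%N.
have qr : q = (4 * r)%N by rewrite qm /r -{1}(subnK m2) expnD mulnC.
have r1 : (1 <= r)%N by rewrite /r expn_gt0.
pose I := ('I_r * 'I_r * 'I_r)%type.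
pose a (i : I) := (2 * (i.1.1 : nat).+1 * q + 2 * i.1.2)%N.
pose b (i : I) := (2 * i.2)%N.
pose N := #|herm_pts F q|.
pose R := #|{: I}|.
pose M : 'M[F]_(R, N) := (\matrix_(j < R, k < N)
   ((enum_val k).1 ^+ a (enum_val j) * (enum_val k).2 ^+ b (enum_val j)))%R.
have rowM : forall j, row j M \in hl_code F q.
  move=> j; rewrite /hl_code; apply: memv_span.
  rewrite mem_filter mem_enum in_setT andbT /hl_wordb.
  case: excluded_middle_informative => // [] [].
  exists (('X^(a (enum_val j)))%:P * 'X^(b (enum_val j)))%R; split.
    move=> al be.
    have [g [sg hg]] := core hfrob h2 hcard al be (K := (enum_val j).1.1.+1)
        (U := (enum_val j).1.2) (W := (enum_val j).2) (ltn0Sn _)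
        (ltac:(have := ltn_ord (enum_val j).1.1; lia))
        (ltac:(have := ltn_ord (enum_val j).1.2; have := ltn_ord (enum_val j).2; lia)).
    exists g; split => // t; rewrite inE /= => /eqP ht.
    by rewrite eval2_mono; apply: hg.
  by move=> k; rewrite !mxE eval2_mono.
pose f : 'Hom('rV[F]_R, 'rV[F]_N) := linfun (mulmxr M).
have ker0 : lker f == 0%VS.
  apply/lker0P => c1 c2; rewrite !lfunE /= => e.
  apply/subr0_eq; set c := (c1 - c2)%R.
  have cM : (c *m M = 0)%R by rewrite /c mulmxBl e subrr.
  apply/matrixP => z j; rewrite (ord1 z) [RHS]mxE.
  pose a' (j : 'I_R) := a (enum_val j).
  pose b' (j : 'I_R) := b (enum_val j).
  move: j; apply: (@indep F q hfrob h2 hcard hF' (ltac:(lia)) _ a' b' (fun j => c 0%R j)).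
  - move=> j1 j2 [] e1 e2; apply: enum_val_inj.
    move: e1 e2; rewrite /a' /b' /a /b.
    case: (enum_val j1) => [[k1 u1] w1]; case: (enum_val j2) => [[k2 u2] w2] /= e1 e2.
    have ew : w1 = w2 by apply: val_inj => /=; lia.
    have [ek eu] : (k1.+1 = k2.+1 /\ (2 * u1 = 2 * u2)%N).
      apply: (@divmod_uniq _ _ _ _ (2 * q)%N).
      + have := ltn_ord u1; lia.
      + have := ltn_ord u2; lia.
      + lia.
    have ek' : k1 = k2 by apply: val_inj => /=; lia.
    have eu' : u1 = u2 by apply: val_inj => /=; lia.
    by rewrite ek' eu' ew.
  - move=> j1; rewrite /a' /a; case: (enum_val j1) => [[k1 u1] w1] /=.
    have := ltn_ord k1; have := ltn_ord u1; rewrite qr; nia.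
  - move=> j1; rewrite /b' /b; case: (enum_val j1) => [[k1 u1] w1] /=.
    have := ltn_ord w1; lia.
  - move=> x y hxy.
    have hp : (x, y) \in herm_pts F q by rewrite inE /= hxy.
    pose kk := enum_rank_in hp (x, y).
    have := congr1 (fun v : 'rV[F]_N => v ord0 kk) cM.
    rewrite /= !mxE => h; rewrite -[RHS]h.
    apply: eq_bigr => j _; rewrite mxE.
    have ev : enum_val kk = (x, y) by rewrite /kk enum_rankK_in.
    by rewrite /M !mxE ev /a' /b' mulrA.
have dimI : \dim (f @: fullv)%VS = R.
  rewrite limg_dim_eq; last by rewrite (eqP ker0) capv0.
  by rewrite dimvf; have := dim_matrix F 1 R; rewrite mul1r.
have sub : (f @: fullv <= hl_code F q)%VS.
  apply/subvP => v /memv_imgP [c _ ->]; rewrite lfunE /= mulmx_sum_row.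
  by apply: memv_suml => j _; apply: memvZ; apply: rowM.
have := dimvS sub; rewrite dimI /R card_prod card_prod !card_ord.
move: (\dim (hl_code F q)) => d hd; rewrite qr; nia.
Qed.
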